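(* Let $k\approx 7.25054$ be the positive real root of $2x^6-13x^5-11x^4+6x^2+x-1=0$. In the triangle $ABC$ with $a=1$ and $b=c=k$, the triangle centers $X_{12}$ and $X_{15}$ coincide.
   Context: $X_n$ denotes the $n$-th triangle center listed in Kimberling's Encyclopedia of Triangle Centers (ETC), given by barycentric coordinates in terms of $a=BC$, $b=CA$, $c=AB$. *)

(* Defs.v *)
From Stdlib Require Import Reals Lra.
Open Scope R_scope.

(* Barycentric triples (unnormalized homogeneous coordinates). *)
Definition bary : Type := (R * R * R)%type.

(* Area S-notation (Conway): S = 2 * area, S_A = (b^2+c^2-a^2)/2. *)
Definition conwayS (a b c : R) : R :=
  sqrt ((a+b+c) * (-a+b+c) * (a-b+c) * (a+b-c)) / 2.
Definition conwaySA (a b c : R) : R := (b^2 + c^2 - a^2) / 2.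

Definition X12 (a b c : R) : bary :=
  ((b+c)^2 / (b+c-a), (c+a)^2 / (c+a-b), (a+b)^2 / (a+b-c)).

Definition X15 (a b c : R) : bary :=
  (a^2 * (sqrt 3 * conwaySA a b c + conwayS a b c),
   b^2 * (sqrt 3 * conwaySA b c a + conwayS a b c),
   c^2 * (sqrt 3 * conwaySA c a b + conwayS a b c)).

Definition bsum (p : bary) : R := let '(x, y, z) := p in x + y + z.

Definition bnorm (p : bary) : bary :=
  let '(x, y, z) := p in (x / bsum p, y / bsum p, z / bsum p).

Definition same_point (p q : bary) : Prop :=
  bsum p <> 0 /\ bsum q <> 0 /\ bnorm p = bnorm q.

(* Main.v *)
Require Import Defs.
From Stdlib Require Import Reals Lra Psatz.
Open Scope R_scope.

Lemma bnorm_sym (x1 y1 z1 x2 y2 z2 : R) :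
  z1 = y1 -> z2 = y2 -> x1 + y1 + z1 <> 0 -> x2 + y2 + z2 <> 0 ->
  x1 * y2 = x2 * y1 -> bnorm (x1, y1, z1) = bnorm (x2, y2, z2).
Proof.
  intros -> -> H1 H2 H. unfold bnorm, bsum.
  assert (E1 : x1 / (x1 + y1 + y1) = x2 / (x2 + y2 + y2)).
  { field_simplify_eq; [nra | auto]. }
  assert (E2 : y1 / (x1 + y1 + y1) = y2 / (x2 + y2 + y2)).
  { field_simplify_eq; [nra | auto]. }
  rewrite E1, E2. reflexivity.
Qed.

Lemma k_big (k : R) : 0 < k ->
  2 * k^6 - 13 * k^5 - 11 * k^4 + 6 * k^2 + k - 1 = 0 -> 7 < k.
Proof.
  intros Hk Hp. destruct (Rlt_le_dec 7 k) as [H|H]; auto. exfalso.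
  destruct (Rlt_le_dec k 1) as [H1|H1].
  - destruct (Rle_lt_dec k (3/10)) as [H2|H2].
    + assert (0 < k^4) by (apply pow_lt; lra).
      assert (0 < k^5) by (apply pow_lt; lra).
      assert (k^6 <= k^5) by (simpl; nra).
      assert (6*k^2 + k - 1 < 0) by (simpl; nra). lra.
    + assert (HI : 2 * k^6 - 13 * k^5 - 11 * k^4 + 6 * k^2 + k - 1 =
        (-299129/32000000 + (-21389/400000) * (k - 9/20)) +
        (k - 9/20)^2 * (-3207/640 - 34137/2000 * k - 4297/200 * k^2
                        - 56/5 * k^3 + 2 * k^4)) by field.
      assert (0 < k^3) by (apply pow_lt; lra).
      assert (k^4 <= 1) by (simpl; nra).
      assert (0 <= (k - 9/20)^2) by apply pow2_ge_0.
      assert ((k - 9/20)^2 * (-3207/640 - 34137/2000 * k - 4297/200 * k^2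
                        - 56/5 * k^3 + 2 * k^4) <= 0).
      { assert (-3207/640 - 34137/2000 * k - 4297/200 * k^2 - 56/5 * k^3 + 2 * k^4 <= 0) by (simpl in *; nra). nra. }
      lra.
  - assert (0 < k^4) by (apply pow_lt; lra).
    assert (HP : 2 * k^6 - 13 * k^5 - 11 * k^4 + 6 * k^2 + k - 1 =
      k^4 * (2*k^2 - 13*k - 11) + (6*k^2 + k - 1)) by ring.
    destruct (Rle_lt_dec k 2) as [H2|H2].
    + assert (k^4 * (2*k^2 - 13*k - 11) <= k^4 * (-22)).
      { apply Rmult_le_compat_l; nra. }
      assert (k^4 >= k^2) by (simpl; nra). simpl in *. nra.
    + assert (k^4 * (2*k^2 - 13*k - 11) <= k^4 * (-4)).
      { apply Rmult_le_compat_l; nra. }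
      assert (k^4 >= 4*k^2) by (simpl; nra). simpl in *. nra.
Qed.

Theorem theorem3p4 (k : R) :
  0 < k ->
  2 * k^6 - 13 * k^5 - 11 * k^4 + 6 * k^2 + k - 1 = 0 ->
  same_point (X12 1 k k) (X15 1 k k).
Proof.
  intros Hk Hp. pose proof (k_big k Hk Hp) as K7.
  unfold X12, X15, conwayS, conwaySA.
  set (t := sqrt ((1 + k + k) * (- (1) + k + k) * (1 - k + k) * (1 + k - k))).
  set (s := sqrt 3).
  assert (Ht2 : t * t = 4*k^2 - 1).
  { unfold t. rewrite sqrt_sqrt. ring. nra. }
  assert (Ht : 0 < t). { unfold t. apply sqrt_lt_R0. nra. }
  assert (Hs2 : s * s = 3). { unfold s. apply sqrt_sqrt. lra. }
  assert (Hs : 0 < s). { unfold s. apply sqrt_lt_R0. lra. }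
  set (A := 4*k^4 - (2*k-1)*(k+1)^2*(2*k^2-1)).
  set (B := (2*k-1)*(k+1)^2 - 4*k^4).
  assert (HA : A < 0). { unfold A. simpl. nra. }
  assert (HB : B < 0). { unfold B. simpl. nra. }
  assert (HE : 3*A^2 - (4*k^2-1)*B^2 =
    (2 * k^6 - 13 * k^5 - 11 * k^4 + 6 * k^2 + k - 1) *
    (-4 - 4*k + 12*k^2 + 4*k^3 - 8*k^4)).
  { unfold A, B. ring. }
  rewrite Hp, Rmult_0_l in HE.
  assert (Hsq : (s*A)*(s*A) = (t*B)*(t*B)).
  { replace ((s*A)*(s*A)) with ((s*s)*A^2) by ring.
    replace ((t*B)*(t*B)) with ((t*t)*B^2) by ring.
    rewrite Hs2, Ht2. lra. }
  assert (Hkey : s*A = t*B).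
  { assert (s*A < 0) by nra. assert (t*B < 0) by nra.
    destruct (Rtotal_order (s*A) (t*B)) as [h|[h|h]]; auto; nra. }
  assert (Hd : 0 < k + k - 1) by lra.
  assert (P1 : 0 < (k + k)^2 / (k + k - 1)).
  { apply Rdiv_lt_0_compat; nra. }
  assert (P2 : 0 < (k + 1)^2 / (k + 1 - k)).
  { apply Rdiv_lt_0_compat; nra. }
  assert (P3 : 0 < (1 + k)^2 / (1 + k - k)).
  { apply Rdiv_lt_0_compat; nra. }
  assert (Q1 : 0 < 1 ^ 2 * (s * ((k ^ 2 + k ^ 2 - 1 ^ 2) / 2) + t / 2)).
  { simpl. nra. }
  assert (Q2 : 0 < k ^ 2 * (s * ((k ^ 2 + 1 ^ 2 - k ^ 2) / 2) + t / 2)).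
  { simpl. nra. }
  assert (Q3 : 0 < k ^ 2 * (s * ((1 ^ 2 + k ^ 2 - k ^ 2) / 2) + t / 2)).
  { simpl. nra. }
  unfold same_point, bsum. split; [lra | split; [lra |]].
  apply bnorm_sym.
  - field. lra.
  - field.
  - lra.
  - lra.
  - unfold A, B in Hkey. field_simplify_eq; [| lra]. nra.
Qed.
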